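(* Let $\Lambda\subseteq\Sigma_A$ and $\Gamma\subseteq\Sigma_B$ be shift spaces. Take $d\in B$ and suppose $\Phi:\Lambda\to\Gamma$ is a map such that $\Phi(\mathcal O)=(ddd\dots)$ (the constant sequence with symbol $d$) and such that $C_\varepsilon:=\Phi^{-1}(\mathcal O)$ is finitely defined in $\Lambda$ in the case that $\mathcal O\in\Gamma$. Then $\Phi$ is continuous and commutes with the shift map if, and only if, $\Phi$ is a sliding block code given by $\bigl(\Phi(x)\bigr)_n=\sum_{a\in L_\Gamma\cup\{\varepsilon\}}a\mathbf{1}_{C_a}\circ\sigma^{n-1}(x)$ such that, for all $a\in L_\Gamma$, the set $C_a$ is a finite (possibly empty) union of generalized cylinders of $\Lambda$, with the following properties: (1) $C_a$ is empty for all but finitely many $a\in L_\Gamma$; and (2) for each $M\ge1$ there exists a finite set $F_M\subset L_\Lambda$ such that $\sigma^{n-1}\bigl(Z(\mathcal O,F_M)\cap\Lambda\bigr)\subseteq C_d$ for all $1\le n\le M$.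
   Context: Alphabets and sequences: $A$ (and similarly $B$) is a countable discrete alphabet, finite or infinite. Let $\varepsilon$ be a new symbol (the empty letter), $\tilde A=A\cup\{\varepsilon\}$. Put $\Sigma_A^{\mathrm{inf}}=A^{\mathbb N}$ and let $\Sigma_A^{\mathrm{fin}}$ be the set of sequences $(x_i)_{i\in\mathbb N}$ in $\tilde A$ containing at least one $\varepsilon$ such that $x_i=\varepsilon$ implies $x_{i+1}=\varepsilon$. The Ott–Tomforde–Willis full shift is $\Sigma_A=\Sigma_A^{\mathrm{inf}}$ if $A$ is finite and $\Sigma_A=\Sigma_A^{\mathrm{inf}}\cup\Sigma_A^{\mathrm{fin}}$ if $A$ is infinite. The length of $x$ is $l(x)=\min\{k-1: x_k=\varepsilon\}$ ($=\infty$ for $x\in A^{\mathbb N}$); a finite sequence of length $k$ is identified with the word $x_1\dots x_k$; the constant sequence $\mathcal O=(\varepsilon\varepsilon\varepsilon\dots)$ is the empty sequence. For $x\in\Sigma_A^{\mathrm{fin}}$ and finite $F\subset A$, the generalized cylinder is $Z(x,F)=\{y\in\Sigma_A: y_i=x_i \text{ for } 1\le i\le l(x),\ y_{l(x)+1}\notin F\}$ (so $Z(\mathcal O,F)=\{y: y_1\notin F\}$). $\Sigma_A$ carries the topology generated by the generalized cylinders. The shift map is $\sigma((x_i)_{i})=(x_{i+1})_i$ (so $\sigma(\mathcal O)=\mathcal O$). For $\Lambda\subseteq\Sigma_A$: $\Lambda^{\mathrm{fin}}=\Lambda\cap\Sigma_A^{\mathrm{fin}}$, $\Lambda^{\mathrm{inf}}=\Lambda\cap\Sigma_A^{\mathrm{inf}}$;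 $B_n(\Lambda)\subseteq\tilde A^n$ is the set of words of length $n$ occurring as consecutive subblocks of elements of $\Lambda$, $B(\Lambda)=\bigcup_{n}B_n(\Lambda)$, $L_\Lambda=B_1(\Lambda)\setminus\{\varepsilon\}$. Follower set: $\mathcal F(\Lambda,a)=\{b\in B_1(\Lambda): ab\in B_{n+1}(\Lambda)\}$ for $a\in B_n(\Lambda)$. A shift space is $\Lambda\subseteq\Sigma_A$ that is closed, satisfies $\sigma(\Lambda)\subseteq\Lambda$, and has the infinite extension property: $\mathcal O\in\Lambda$ iff $L_\Lambda$ is infinite, and a finite sequence $x\neq\mathcal O$ lies in $\Lambda$ iff $|\mathcal F(\Lambda,x)|=\infty$. Generalized cylinders of $\Lambda$ are the sets $Z(x,F)\cap\Lambda$. Finitely defined sets: $C\subseteq\Lambda$ is finitely defined in $\Lambda$ if there exist $I,J\subseteq\mathbb N$, integers $\ell_i,n_j\ge0$ and words $b_i,d_j\in B(\Sigma_A)$ with $C=\{x\in\Lambda: (x_1\dots x_{1+\ell_i})=b_i\text{ for some } i\in I\}$ and $\Lambda\setminus C=\{x\in\Lambda: (x_1\dots x_{1+n_j})=d_j \text{ for some } j\in J\}$. Sliding block codes: given a partition $\{C_a\}_{a\in B\cup\{\varepsilon\}}$ of a shift space $\Lambda$ such that each $C_a$ is finitely defined in $\Lambda$ and $\sigma(C_\varepsilon)\subseteq C_\varepsilon$, the map $\Phi:\Lambda\to\Sigma_B$ with $(\Phi(x))_n$ equal to the unique $a$ with $\sigma^{n-1}(x)\in C_a$ is a sliding block code.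 *)

(* Defs.v *)
From mathcomp Require Import all_boot all_order.
Set Implicit Arguments. Unset Strict Implicit. Unset Printing Implicit Defensive.

(* A sequence (x_i)_{i in N} over A~ = A ∪ {ε}: [None] is ε.
   Index convention: x_1 (paper) is [x 0] here. *)
Definition sq (A : Type) := nat -> option A.

Section OTW.
Variable A : countType.

Definition alph_finite : Prop := exists l : seq A, forall a, a \in l.

Definition inSigma (x : sq A) : Prop :=
  (forall i, x i = None -> x i.+1 = None) /\
  (alph_finite -> forall i, x i <> None).

Definition Oseq : sq A := fun _ => None.

Definition word_seq (w : seq A) : sq A :=
  fun i => if i < size w then nth None [seq Some a | a <- w] i
           else None.

Definition shift (x : sq A) : sq A := fun i => x i.+1.

Definition cyl (w : seq A) (F : seq A) (y : sq A) : Prop :=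
  inSigma y /\
  (forall i, i < size w -> y i = nth None [seq Some a | a <- w] i) /\
  (match y (size w) with Some a => a \notin F | None => True end).

Definition in_all_cyl (l : seq (seq A * seq A)) (y : sq A) : Prop :=
  inSigma y /\ forall p, p \in l -> cyl p.1 p.2 y.

(* U (read as the subset U ∩ Σ_A) is open in the topology on Σ_A
   generated by the generalized cylinders *)
Definition is_open (U : sq A -> Prop) : Prop :=
  forall x, inSigma x -> U x ->
    exists l, in_all_cyl l x /\ forall y, in_all_cyl l y -> U y.

Definition is_closed (L : sq A -> Prop) : Prop :=
  is_open (fun x => ~ L x).

Definition occurs (P : sq A -> Prop) (w : seq (option A)) : Prop :=
  exists x, P x /\ exists i, forall j, j < size w -> x (i + j) = nth None w j.

Definition Lset (L : sq A -> Prop) (a : A) : Prop := occurs L [:: Some a].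

Definition follower (L : sq A -> Prop) (w : seq (option A)) (b : option A) : Prop :=
  occurs L (rcons w b).

Definition infinite_set (T : eqType) (P : T -> Prop) : Prop :=
  ~ exists l : seq T, forall t, P t -> t \in l.

Definition shift_space (L : sq A -> Prop) : Prop :=
  (forall x, L x -> inSigma x) /\
  is_closed L /\
  (forall x, L x -> L (shift x)) /\
  (L Oseq <-> infinite_set (Lset L)) /\
  (forall w : seq A, w != [::] ->
     (L (word_seq w) <-> infinite_set (follower L [seq Some a | a <- w]))).

Definition prefix_is (x : sq A) (n : nat) (b : seq (option A)) : Prop :=
  size b = n.+1 /\ forall k, k <= n -> x k = nth None b k.

Definition finitely_defined (L C : sq A -> Prop) : Prop :=
  (forall x, C x -> L x) /\
  exists (I J : nat -> Prop) (ell n : nat -> nat) (b d : nat -> seq (option A)),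
    (forall i, I i -> occurs inSigma (b i)) /\
    (forall j, J j -> occurs inSigma (d j)) /\
    (forall x, C x <-> L x /\ exists i, I i /\ prefix_is x (ell i) (b i)) /\
    (forall x, (L x /\ ~ C x) <-> L x /\ exists j, J j /\ prefix_is x (n j) (d j)).

End OTW.

Definition continuous_on (A B : countType) (L : sq A -> Prop)
  (Phi : sq A -> sq B) : Prop :=
  forall V : sq B -> Prop, is_open V ->
    exists U : sq A -> Prop, is_open U /\ forall x, L x -> (V (Phi x) <-> U x).

(* Main.v *)
Require Import Defs.
From mathcomp Require Import all_boot all_order.
From Stdlib Require Import Classical ClassicalEpsilon FunctionalExtensionality.
Set Implicit Arguments. Unset Strict Implicit. Unset Printing Implicit Defensive.


Lemma iter_shiftE (A : countType) n (x : sq A) i : iter n (@shift A) x i = x (n + i).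
Proof. by elim: n i => [|n IH] i //=; rewrite /shift IH addnS. Qed.

Lemma inSigma_none (A : countType) (x : sq A) k j :
  inSigma x -> x k = None -> k <= j -> x j = None.
Proof.
move=> [H _] Hk; elim: j => [|j IH]; first by rewrite leqn0 => /eqP <-.
rewrite leq_eqVlt => /orP [/eqP <-|]; first by [].
by rewrite ltnS => /IH /H.
Qed.

Lemma inSigma_shift (A : countType) (x : sq A) n :
  inSigma x -> inSigma (iter n (@shift A) x).
Proof.
move=> [H1 H2]; split=> [i|Hf i]; rewrite !iter_shiftE.
  by rewrite addnS; apply: H1.
by apply: H2.
Qed.

Lemma first_fail (P : nat -> Prop) N :
  (forall j, j < N -> P j) \/ exists k, k < N /\ ~ P k /\ forall j, j < k -> P j.
Proof.
elim: N => [|N [IH|[k [Hk [Hn Hj]]]]]; first by left.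
- case: (classic (P N)) => HP.
    left=> j; rewrite ltnS leq_eqVlt => /orP [/eqP -> //|]; exact: IH.
  by right; exists N; split.
- by right; exists k; split; [exact: ltnW|].
Qed.

Definition pre (A : Type) (x : sq A) N : seq A := pmap x (iota 0 N).

Lemma map_pmap_some (U : Type) (f : nat -> option U) (s : seq nat) :
  (forall t, t \in s -> f t <> None) -> [seq Some a | a <- pmap f s] = map f s.
Proof.
elim: s => [|t s IH] H //=.
have Ht := H t (mem_head _ _).
have IH' : [seq Some a | a <- pmap f s] = map f s.
  by apply: IH => t' Ht'; apply: H; rewrite in_cons Ht' orbT.
case E: (f t) => [u|] /=; first by rewrite IH'.
by rewrite E in Ht.
Qed.

Lemma pre_spec (A : countType) (x : sq A) N :
  (forall j, j < N -> x j <> None) ->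
  size (pre x N) = N /\ forall i, i < N -> nth None [seq Some a | a <- pre x N] i = x i.
Proof.
move=> H.
have E : [seq Some a | a <- pre x N] = map x (iota 0 N).
  by apply: map_pmap_some => t; rewrite mem_iota add0n => /andP [_]; apply: H.
split; first by rewrite -(size_map Some) E size_map size_iota.
by move=> i Hi; rewrite E (nth_map 0) ?size_iota // nth_iota.
Qed.


Lemma cyl_agree (A : countType) (w F : seq A) (x y : sq A) :
  cyl w F x -> inSigma y -> (forall i, i <= size w -> y i = x i) -> cyl w F y.
Proof.
move=> [_ [H1 H2]] Hy E; split=> //; split.
  by move=> i Hi; rewrite E; [exact: H1|exact: ltnW].
by rewrite E.
Qed.

Lemma cyl_pre (A : countType) (x : sq A) N (F : seq A) :
  inSigma x -> (forall j, j < N -> x j <> None) ->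
  (match x N with Some a => is_true (a \notin F) | None => True end) -> cyl (pre x N) F x.
Proof.
move=> Hx HN Hl; have [Hs Hn] := pre_spec HN.
by split=> //; split; [move=> i; rewrite Hs => Hi; rewrite Hn | rewrite Hs].
Qed.

Lemma cyl_pre_agree (A : countType) (x y : sq A) N (F : seq A) :
  (forall j, j < N -> x j <> None) -> cyl (pre x N) F y -> forall i, i < N -> y i = x i.
Proof.
move=> HN [_ [H _]] i Hi; have [Hs Hn] := pre_spec HN.
by rewrite H ?Hs // Hn.
Qed.

Lemma size_le_sumn (A : countType) (l : seq (seq A * seq A)) p :
  p \in l -> size p.1 <= sumn [seq size q.1 | q <- l].
Proof.
elim: l => [|q l IH] //=; rewrite in_cons => /orP [/eqP ->|/IH]; first exact: leq_addr.
by move=> H; apply: leq_trans H (leq_addl _ _).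
Qed.

Lemma nth_map_some (A : Type) (w : seq A) k :
  k < size w -> exists b, nth None [seq Some a | a <- w] k = Some b.
Proof.
elim: w k => [|a w IH] [|k] //= Hk; first by exists a.
exact: IH.
Qed.

Lemma prefix_len (A : countType) (w : seq A) (x : sq A) k :
  (forall i, i < size w -> x i = nth None [seq Some a | a <- w] i) ->
  x k = None -> size w <= k.
Proof.
move=> H Hk; rewrite leqNgt; apply/negP => Hlt.
have [b Hb] := nth_map_some Hlt.
by move: (H k Hlt); rewrite Hk Hb.
Qed.

Lemma mem_flat (A : countType) (l : seq (seq A * seq A)) p a :
  p \in l -> a \in p.2 -> a \in flatten [seq q.2 | q <- l].
Proof.
elim: l => [|q l IH] //; rewrite in_cons => /orP [/eqP ->|Hp] Ha /=; rewrite mem_cat.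
  by rewrite Ha.
by rewrite IH ?orbT.
Qed.

Lemma RED (A : countType) (l : seq (seq A * seq A)) (x : sq A) :
  in_all_cyl l x ->
  exists w F, cyl w F x /\ forall y, cyl w F y -> in_all_cyl l y.
Proof.
move=> [Hx Hl].
set N := (sumn [seq size q.1 | q <- l]).+1.
have [HN|[k [HkN [Hk Hj]]]] := first_fail (fun j => x j <> None) N.
- exists (pre x N), [::]; split; first by apply: cyl_pre => //; case: (x N).
  move=> y Hy; have Hy' := cyl_pre_agree HN Hy; split; first by case: Hy.
  move=> p Hp; apply: cyl_agree (Hl p Hp) _ _; first by case: Hy.
  by move=> i Hi; apply: Hy'; apply: leq_ltn_trans Hi _; rewrite ltnS size_le_sumn.
- have Hk' : x k = None by apply: NNPP.
  exists (pre x k), (flatten [seq q.2 | q <- l]); split.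
    by apply: cyl_pre => //; rewrite Hk'.
  move=> y Hy; have Hy' := cyl_pre_agree Hj Hy; split; first by case: Hy.
  move=> p Hp; have Hpx := Hl p Hp; have [_ [Hp1 Hp2]] := Hpx.
  have Hle := prefix_len Hp1 Hk'.
  move: Hle; rewrite leq_eqVlt => /orP [/eqP Heq|Hlt].
    split; first by case: Hy.
    split; first by move=> i Hi; rewrite Hy'; [exact: Hp1|by rewrite -Heq].
    have [_ [_ Hyl]] := Hy; rewrite Heq.
    have [Hs _] := pre_spec Hj; move: Hyl; rewrite Hs.
    case: (y k) => // a Ha; apply/negP => HaF; move/negP: Ha; apply.
    exact: mem_flat Hp HaF.
  apply: cyl_agree Hpx _ _; first by case: Hy.
  by move=> i Hi; apply: Hy'; apply: leq_ltn_trans Hi Hlt.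
Qed.


Lemma NOTCYL (A : countType) (w F : seq A) (x : sq A) :
  inSigma x -> ~ cyl w F x ->
  exists w' F', cyl w' F' x /\ forall y, cyl w' F' y -> ~ cyl w F y.
Proof.
move=> Hx Hn.
have [HP|[k [Hk [Hnk Hj]]]] :=
  first_fail (fun j => x j = nth None [seq Some a | a <- w] j) (size w).
- have HS : forall j, j < size w -> x j <> None.
    by move=> j Hj; rewrite HP //; have [b ->] := nth_map_some Hj.
  case E: (x (size w)) => [a|]; last by exfalso; apply: Hn; split=> //; split=> //; rewrite E.
  have Ha : a \in F.
    by apply: negbNE; apply/negP => Ha; apply: Hn; split=> //; split=> //; rewrite E.
  have HS' : forall j, j < (size w).+1 -> x j <> None.
    by move=> j; rewrite ltnS leq_eqVlt => /orP [/eqP ->|/HS //]; rewrite E.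
  exists (pre x (size w).+1), [::]; split; first by apply: cyl_pre => //; case: (x _).
  move=> y Hy [_ [_ Hl]]; move: Hl.
  by rewrite (cyl_pre_agree HS' Hy) // E Ha.
- have [b Hb] := nth_map_some Hk.
  have HS : forall j, j < k -> x j <> None.
    by move=> j Hjk; rewrite Hj //; have [b' ->] := nth_map_some (ltn_trans Hjk Hk).
  exists (pre x k), [:: b]; split.
    apply: cyl_pre => //; case E: (x k) => [a|] //; rewrite inE.
    by apply/eqP => Hab; apply: Hnk; rewrite E Hb Hab.
  move=> y Hy [_ [Hp _]]; have [_ [_ Hl]] := Hy; move: Hl; have [Hs _] := pre_spec HS; rewrite Hs.
  by rewrite (Hp k Hk) Hb inE eqxx.
Qed.

Lemma SHIFTPB (A : countType) (w F : seq A) (x : sq A) i :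
  inSigma x -> (forall j, j < i -> x j <> None) -> cyl w F (iter i (@shift A) x) ->
  exists w' F', cyl w' F' x /\ forall y, cyl w' F' y -> cyl w F (iter i (@shift A) y).
Proof.
move=> Hx HS [_ [Hp Hl]]; have [Hs Hn] := pre_spec HS.
exists (pre x i ++ w), F; split.
  split=> //; split.
    move=> j; rewrite size_cat Hs => Hj; rewrite map_cat nth_cat size_map Hs.
    case: ifP => Hji; first by rewrite Hn.
    rewrite -Hp; last by rewrite ltn_subLR // leqNgt Hji.
    by rewrite iter_shiftE subnKC // leqNgt Hji.
  by rewrite size_cat Hs -iter_shiftE.
move=> y [Hy [Hyp Hyl]]; split; first exact: inSigma_shift.
split.
  move=> j Hj; rewrite iter_shiftE Hyp; last by rewrite size_cat Hs ltn_add2l.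
  by rewrite map_cat nth_cat size_map Hs ltnNge leq_addr /= addKn.
by rewrite iter_shiftE; move: Hyl; rewrite size_cat Hs.
Qed.

Definition NbS (A : countType) (x : sq A) (P : sq A -> Prop) :=
  exists l, in_all_cyl l x /\ forall y, in_all_cyl l y -> P y.

Lemma NbS_cyl (A : countType) (w F : seq A) x : cyl w F x -> NbS x (cyl w F).
Proof.
move=> H; exists [:: (w, F)]; split.
  by split; [case: H|move=> p; rewrite inE => /eqP ->].
by move=> y [_ Hy]; apply: (Hy (w, F)); rewrite inE.
Qed.

Lemma in_all_cyl_cat (A : countType) (l1 l2 : seq (seq A * seq A)) y :
  in_all_cyl (l1 ++ l2) y <-> in_all_cyl l1 y /\ in_all_cyl l2 y.
Proof.
split.
  move=> [Hy H]; split; split=> // p Hp; apply: H; rewrite mem_cat Hp ?orbT //.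
move=> [[Hy H1] [_ H2]]; split=> // p; rewrite mem_cat => /orP [/H1|/H2] //.
Qed.

Lemma NbS_and (A : countType) (x : sq A) P Q : NbS x P -> NbS x Q -> NbS x (fun y => P y /\ Q y).
Proof.
move=> [l1 [H1 K1]] [l2 [H2 K2]]; exists (l1 ++ l2); split; first by apply/in_all_cyl_cat.
by move=> y /in_all_cyl_cat [/K1 ? /K2 ?].
Qed.

Lemma NbS_mono (A : countType) (x : sq A) (P Q : sq A -> Prop) :
  (forall y, P y -> Q y) -> NbS x P -> NbS x Q.
Proof. by move=> H [l [H1 K]]; exists l; split=> // y /K /H. Qed.

Lemma NbS_true (A : countType) (x : sq A) : inSigma x -> NbS x (fun _ => True).
Proof. by move=> Hx; exists [::]; split. Qed.

Lemma NbS_all (A : countType) (T : eqType) (s : seq T) (x : sq A) (P : T -> sq A -> Prop) :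
  inSigma x -> (forall t, t \in s -> NbS x (P t)) -> NbS x (fun y => forall t, t \in s -> P t y).
Proof.
move=> Hx; elim: s => [|t s IH] H.
  by apply: NbS_mono (NbS_true Hx).
have H1 := H t (mem_head _ _).
have H2 : NbS x (fun y => forall t, t \in s -> P t y).
  by apply: IH => t' Ht'; apply: H; rewrite in_cons Ht' orbT.
apply: NbS_mono (NbS_and H1 H2) => y [Py Qy] t'.
by rewrite in_cons => /orP [/eqP ->|/Qy].
Qed.

Lemma NbS_red (A : countType) (x : sq A) P :
  NbS x P -> exists w F, cyl w F x /\ forall y, cyl w F y -> P y.
Proof.
move=> [l [H K]]; have [w [F [H1 H2]]] := RED H.
by exists w, F; split=> // y /H2 /K.
Qed.

Lemma NbS_shift (A : countType) (x : sq A) i P :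
  inSigma x -> (forall j, j < i -> x j <> None) -> NbS (iter i (@shift A) x) P ->
  NbS x (fun y => P (iter i (@shift A) y)).
Proof.
move=> Hx HS /NbS_red [w [F [H1 H2]]].
have [w' [F' [K1 K2]]] := SHIFTPB Hx HS H1.
by apply: NbS_mono (NbS_cyl K1) => y /K2 /H2.
Qed.

Lemma NbS_notcyl (A : countType) (w F : seq A) (x : sq A) :
  inSigma x -> ~ cyl w F x -> NbS x (fun y => ~ cyl w F y).
Proof.
move=> Hx Hn; have [w' [F' [H1 H2]]] := NOTCYL Hx Hn.
by apply: NbS_mono (NbS_cyl H1).
Qed.


Definition PW (A : countType) (w : seq A) (x : sq A) :=
  forall i, i < size w -> x i = nth None [seq Some a | a <- w] i.

Lemma PW_rcons (A : countType) (w : seq A) a x :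
  PW w x -> x (size w) = Some a -> PW (rcons w a) x.
Proof.
move=> H Ha i; rewrite size_rcons ltnS leq_eqVlt => /orP [/eqP ->|Hi].
  by rewrite map_rcons nth_rcons size_map ltnn eqxx.
by rewrite map_rcons nth_rcons size_map Hi H.
Qed.

Lemma word_seq_lt (A : countType) (w : seq A) i :
  i < size w -> word_seq w i = nth None [seq Some a | a <- w] i.
Proof. by rewrite /word_seq => ->. Qed.

Lemma word_seq_ge (A : countType) (w : seq A) i :
  size w <= i -> word_seq w i = None.
Proof. by rewrite /word_seq ltnNge => ->. Qed.

Lemma inSigma_word (A : countType) (w : seq A) : ~ alph_finite A -> inSigma (word_seq w).
Proof.
move=> Hf; split=> [i Hi|//].
apply: word_seq_ge; case: (ltnP i (size w)) => Hlt; last exact: leqW.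
have [b Hb] := nth_map_some Hlt.
by move: Hi; rewrite word_seq_lt // Hb.
Qed.

Lemma cyl_word (A : countType) (w' F w : seq A) :
  cyl w' F (word_seq w) -> forall x, inSigma x -> PW w x ->
  cyl w' F x \/ exists a, a \in F /\ x (size w) = Some a.
Proof.
move=> Hc x Hx Hpw; have [_ [Hp1 Hp2]] := Hc.
have Hle : size w' <= size w by apply: prefix_len Hp1 (word_seq_ge (leqnn _)).
move: Hle; rewrite leq_eqVlt => /orP [/eqP Heq|Hlt].
  case E: (x (size w)) => [a|].
    case Ha: (a \in F); first by right; exists a.
    left; split=> //; split; last by rewrite Heq E Ha.
    by move=> i Hi; rewrite Hpw -?Heq // -word_seq_lt -?Heq // Hp1.
  left; split=> //; split; last by rewrite Heq E.
  by move=> i Hi; rewrite Hpw -?Heq // -word_seq_lt -?Heq // Hp1.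
left; apply: cyl_agree Hc Hx _ => i Hi.
have Hi' : i < size w by apply: leq_ltn_trans Hi Hlt.
by rewrite Hpw // word_seq_lt.
Qed.


Definition Cov (A : countType) (L : sq A -> Prop) (Good : seq A -> seq A -> Prop) (w : seq A) :=
  exists l : seq (seq A * seq A), (forall p, p \in l -> Good p.1 p.2) /\
    forall x, L x -> PW w x -> exists2 p, p \in l & cyl p.1 p.2 x.

Lemma Cov_union (A : countType) L Good (w s : seq A) :
  (forall a, a \in s -> Cov L Good (rcons w a)) ->
  exists l : seq (seq A * seq A), (forall p, p \in l -> Good p.1 p.2) /\
    forall x, L x -> (exists a, a \in s /\ PW (rcons w a) x) -> exists2 p, p \in l & cyl p.1 p.2 x.
Proof.
elim: s => [|a s IH] H.
  by exists [::]; split=> // x _ [a []].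
have [l1 [G1 K1]] := H a (mem_head _ _).
have [l2 [G2 K2]] : exists l : seq (seq A * seq A), (forall p, p \in l -> Good p.1 p.2) /\
    forall x, L x -> (exists a, a \in s /\ PW (rcons w a) x) -> exists2 p, p \in l & cyl p.1 p.2 x.
  by apply: IH => b Hb; apply: H; rewrite in_cons Hb orbT.
exists (l1 ++ l2); split.
  by move=> p; rewrite mem_cat => /orP [/G1|/G2].
move=> x Lx [b [Hb Hpw]]; move: Hb; rewrite in_cons => /orP [/eqP Eb|Hb].
  by subst b; have [p Hp Hc] := K1 x Lx Hpw; exists p => //; rewrite mem_cat Hp.
have [p Hp Hc] := K2 x Lx (ex_intro _ b (conj Hb Hpw)).
by exists p => //; rewrite mem_cat Hp orbT.
Qed.

Lemma Cov_step (A : countType) L Good (w : seq A) :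
  (forall x, L x -> inSigma x) -> is_closed L ->
  (forall x, L x -> exists w F, Good w F /\ cyl w F x) ->
  ~ Cov L Good w -> exists a, ~ Cov L Good (rcons w a).
Proof.
move=> HL Hcl HG HnC; apply: NNPP => Hne; apply: HnC.
have Hall : forall a, Cov L Good (rcons w a).
  by move=> a; apply: NNPP => Ha; apply: Hne; exists a.
case: (classic (alph_finite A)) => [[s Hs]|Hnf].
  have [l [G K]] := Cov_union (w := w) (s := s) (fun a _ => Hall a).
  exists l; split=> // x Lx Hpw; apply: K => //.
  have [_ Hx2] := HL x Lx.
  case E: (x (size w)) => [a|]; last by exfalso; apply: (Hx2 (ex_intro _ s Hs) (size w)).
  by exists a; split; [apply: Hs|apply: PW_rcons].
have Hpw := inSigma_word w Hnf.
have [w' [F [Hc HGc]]] : exists w' F, cyl w' F (word_seq w) /\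
    (Good w' F \/ forall y, cyl w' F y -> ~ L y).
  case: (classic (L (word_seq w))) => Hl.
    by have [w' [F [H1 H2]]] := HG _ Hl; exists w', F; split=> //; left.
  have := Hcl _ Hpw Hl => /NbS_red [w' [F [H1 H2]]].
  by exists w', F; split=> //; right.
have [l1 [G1 K1]] := Cov_union (w := w) (s := F) (fun a _ => Hall a).
case: HGc => [Hgood|Hbad].
  exists ((w', F) :: l1); split.
    by move=> p; rewrite in_cons => /orP [/eqP -> //|/G1].
  move=> x Lx Hx; case: (cyl_word Hc (HL x Lx) Hx) => [Hcx|[a [Ha Hxa]]].
    by exists (w', F) => //; rewrite mem_head.
  have [p Hp Hcp] := K1 x Lx (ex_intro _ a (conj Ha (PW_rcons Hx Hxa))).
  by exists p => //; rewrite in_cons Hp orbT.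
exists l1; split=> // x Lx Hx; case: (cyl_word Hc (HL x Lx) Hx) => [Hcx|[a [Ha Hxa]]].
  by exfalso; apply: (Hbad x).
exact: K1 x Lx (ex_intro _ a (conj Ha (PW_rcons Hx Hxa))).
Qed.


Fixpoint pf (A : Type) (f : seq A -> A) n : seq A :=
  if n is n'.+1 then rcons (pf f n') (f (pf f n')) else [::].

Lemma size_pf (A : Type) (f : seq A -> A) n : size (pf f n) = n.
Proof. by elim: n => //= n IH; rewrite size_rcons IH. Qed.

Lemma nth_pf (A : Type) (f : seq A -> A) a0 n i :
  i < n -> nth a0 (pf f n) i = nth a0 (pf f i.+1) i.
Proof.
elim: n => // n IH; rewrite ltnS leq_eqVlt => /orP [/eqP ->//|Hi] /=.
by rewrite nth_rcons size_pf Hi IH.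
Qed.

Lemma compact (A : countType) (L : sq A -> Prop) (Good : seq A -> seq A -> Prop) :
  (forall x, L x -> inSigma x) -> is_closed L ->
  (forall x, L x -> exists w F, Good w F /\ cyl w F x) ->
  exists l : seq (seq A * seq A), (forall p, p \in l -> Good p.1 p.2) /\
     forall x, L x -> exists2 p, p \in l & cyl p.1 p.2 x.
Proof.
move=> HL Hcl HG; apply: NNPP => Hn.
have H0 : ~ Cov L Good [::].
  move=> [l [G K]]; apply: Hn; exists l; split=> // x Lx; apply: K => //.
have [a0 _] := Cov_step HL Hcl HG H0.
pose P w a := ~ Cov L Good w -> ~ Cov L Good (rcons w a).
pose f w := epsilon (inhabits a0) (P w).
have Hf : forall w, P w (f w).
  move=> w; apply: epsilon_spec; case: (classic (Cov L Good w)) => Hc.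
    by exists a0.
  by have [a Ha] := Cov_step HL Hcl HG Hc; exists a.
have Hpf : forall n, ~ Cov L Good (pf f n).
  by elim=> //= n IH; apply: Hf.
pose x : sq A := fun i => Some (nth a0 (pf f i.+1) i).
have Hx : inSigma x by split.
have HPW : forall n, PW (pf f n) x.
  move=> n i; rewrite size_pf => Hi.
  by rewrite (nth_map a0) ?size_pf // nth_pf.
have Hagree : forall n y, PW (pf f n) y -> forall i, i < n -> y i = x i.
  by move=> n y Hy i Hi; rewrite Hy ?size_pf // -HPW ?size_pf.
case: (classic (L x)) => Lx.
  have [w [F [Hg Hc]]] := HG x Lx.
  apply: (Hpf (size w).+1); exists [:: (w, F)]; split.
    by move=> p; rewrite inE => /eqP ->.
  move=> y Ly Hy; exists (w, F); first by rewrite inE.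
  by apply: cyl_agree Hc (HL y Ly) _ => i Hi; apply: Hagree Hy _ _.
have := Hcl _ Hx Lx => /NbS_red [w [F [H1 H2]]].
apply: (Hpf (size w).+1); exists [::]; split; first by [].
move=> y Ly Hy.
exfalso; apply: (H2 y _ Ly); apply: cyl_agree H1 (HL y Ly) _ => i Hi.
exact: Hagree Hy _ _.
Qed.


Lemma sub_list (T : eqType) (s : seq T) (P : T -> Prop) :
  exists s' : seq T, (forall a, a \in s' -> a \in s /\ P a) /\ (forall a, a \in s -> P a -> a \in s').
Proof.
elim: s => [|t s [s' [H1 H2]]]; first by exists [::].
case: (classic (P t)) => Pt.
  exists (t :: s'); split.
    move=> a; rewrite in_cons => /orP [/eqP ->|/H1 [Ha Pa]]; first by rewrite mem_head.
    by rewrite in_cons Ha orbT.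
  move=> a; rewrite !in_cons => /orP [/eqP ->|Ha Pa]; first by rewrite eqxx.
  by rewrite H2 ?orbT.
exists s'; split.
  by move=> a /H1 [Ha Pa]; rewrite in_cons Ha orbT.
move=> a; rewrite in_cons => /orP [/eqP ->|Ha Pa] //; exact: H2.
Qed.

Definition wordof (A : countType) (j : nat) : seq (option A) :=
  odflt [::] (unpickle j).

Definition GoodW (A : countType) (L P : sq A -> Prop) (w : seq (option A)) :=
  0 < size w /\ (exists x, L x /\ prefix_is x (size w).-1 w) /\
  forall y, L y -> prefix_is y (size w).-1 w -> P y.

Lemma prefix_map (A : countType) (x : sq A) n :
  prefix_is x n (map x (iota 0 n.+1)).
Proof.
split; first by rewrite size_map size_iota.
by move=> k Hk; rewrite (nth_map 0) ?size_iota // nth_iota.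
Qed.

Lemma prefix_map_agree (A : countType) (x y : sq A) n :
  prefix_is y n (map x (iota 0 n.+1)) -> forall k, k <= n -> y k = x k.
Proof.
by move=> [_ H] k Hk; rewrite H // (nth_map 0) ?size_iota // nth_iota.
Qed.

Lemma fd_local (A : countType) (L C : sq A -> Prop) (P : sq A -> Prop) x n :
  L x -> P x -> (forall y, L y -> (forall k, k <= n -> y k = x k) -> P y) ->
  exists i, GoodW L P (wordof A i) /\ prefix_is x (size (wordof A i)).-1 (wordof A i).
Proof.
move=> Lx Px H; set w := map x (iota 0 n.+1).
have Hw : size w = n.+1 by rewrite size_map size_iota.
have Hp : prefix_is x n w by apply: prefix_map.
have Hag : forall y, prefix_is y n w -> forall k, k <= n -> y k = x k.
  by move=> y; apply: prefix_map_agree.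
exists (pickle w); rewrite /wordof pickleK; clearbody w; rewrite /= Hw /=.
split=> //; split; first by rewrite Hw.
rewrite Hw /=; split; first by exists x.
by move=> y Ly Hy; apply: H => //; apply: Hag.
Qed.

Lemma fd_of_local (A : countType) (L C : sq A -> Prop) :
  (forall x, C x -> L x) -> (forall x, L x -> inSigma x) ->
  (forall x, L x -> exists n, forall y, L y -> (forall k, k <= n -> y k = x k) -> (C y <-> C x)) ->
  finitely_defined L C.
Proof.
move=> HCL HL Hloc; split=> //.
exists (fun i => GoodW L C (wordof A i)), (fun j => GoodW L (fun y => ~ C y) (wordof A j)).
exists (fun i => (size (wordof A i)).-1), (fun i => (size (wordof A i)).-1).
exists (@wordof A), (@wordof A).
have Hocc : forall P i, GoodW L P (wordof A i) -> occurs (@inSigma A) (wordof A i).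
  move=> P i [Hs [[x [Lx [Hsz Hp]]] _]]; exists x; split; first exact: HL.
  exists 0 => j Hj; rewrite add0n Hp //; rewrite -ltnS prednK //.
split; first by move=> i; apply: Hocc.
split; first by move=> j; apply: Hocc.
split.
  move=> x; split.
    move=> Cx; have Lx := HCL x Cx; split=> //; have [n Hn] := Hloc x Lx.
    have [i [Hi Hp]] := fd_local C Lx Cx (fun y Ly Hy => proj2 (Hn y Ly Hy) Cx).
    by exists i.
  by move=> [Lx [i [[_ [_ Hi]] Hp]]]; apply: Hi.
move=> x; split.
  move=> [Lx Cx]; split=> //; have [n Hn] := Hloc x Lx.
  have [i [Hi Hp]] := fd_local C Lx Cx (fun y Ly Hy Cy => Cx (proj1 (Hn y Ly Hy) Cy)).
  by exists i.
by move=> [Lx [i [[_ [_ Hi]] Hp]]]; split=> //; apply: Hi.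
Qed.


Lemma cyl_open (T : countType) (w F : seq T) : is_open (cyl w F).
Proof. by move=> x Hx Hc; apply: NbS_cyl Hc. Qed.

Lemma open0 (A B : countType) (L : sq A -> Prop) (G : sq B -> Prop)
  (d : B) (Phi : sq A -> sq B) :
  shift_space L -> shift_space G ->
  (forall x, L x -> G (Phi x)) ->
  (L (Oseq A) -> forall i, Phi (Oseq A) i = Some d) ->
  (G (Oseq B) -> finitely_defined L (fun x => L x /\ forall i, Phi x i = None)) ->
  continuous_on L Phi ->
  (forall x, L x -> forall i, Phi (shift x) i = shift (Phi x) i) ->
  forall x, L x -> NbS x (fun y => L y -> Phi y 0 = Phi x 0).
Proof.
move=> HLs HGs HPhi HO HfdN Hcont Hsh.
have [HL [Hcl [HLsh [HLO _]]]] := HLs; have [HG _] := HGs.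
have HLit : forall x n, L x -> L (iter n (@shift A) x).
  by move=> x n Lx; elim: n => //= n IH; apply: HLsh.
have HPit : forall x n i, L x -> Phi (iter n (@shift A) x) i = Phi x (n + i).
  move=> x n i Lx; elim: n i => [|n IH] i //=.
  rewrite Hsh; last exact: HLit.
  by change (Phi (iter n (@shift A) x) i.+1 = Phi x (n.+1 + i)); rewrite IH addnS.
have HOeq : forall x k, L x -> x k = None -> iter k (@shift A) x = Oseq A.
  move=> x k Lx Hk; apply: functional_extensionality => j.
  by rewrite iter_shiftE (inSigma_none (HL x Lx) Hk (leq_addr _ _)).
have F4 : forall x k, L x -> x k = None -> Phi x k = Some d.
  move=> x k Lx Hk; rewrite -(addn0 k) -HPit // HOeq //; apply: HO.
  by rewrite -(HOeq x k) //; apply: HLit.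
have F5 : forall x i k, L x -> Phi x i = None -> x k <> None.
  move=> x i k Lx Hi Hk.
  have := F4 x (maxn i k) Lx (inSigma_none (HL x Lx) Hk (leq_maxr i k)).
  by rewrite (inSigma_none (HG _ (HPhi x Lx)) Hi (leq_maxl i k)).
move=> x Lx; case E: (Phi x 0) => [b|].
- have [U [HU HUV]] := Hcont (cyl [:: b] [::]) (@cyl_open B [:: b] [::]).
  have Ux : U x.
    apply/HUV => //; split; first exact: HG (HPhi x Lx).
    split; last by case: (Phi x 1).
    by move=> i; rewrite ltnS leqn0 => /eqP ->; rewrite E.
  have [l [Hl K]] := HU x (HL x Lx) Ux.
  exists l; split=> // y Hy Ly.
  by have [_ [Hp _]] := proj2 (HUV y Ly) (K y Hy); rewrite (Hp 0).
- have GO : G (Oseq B).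
    have -> : Oseq B = Phi x; last exact: HPhi.
    apply: functional_extensionality => j; symmetry.
    exact: inSigma_none (HG _ (HPhi x Lx)) E (leq0n _).
  have := HfdN GO; rewrite /finitely_defined => -[_ [I [J [ell [n [bb [dd [_ [_ [Hc _]]]]]]]]]].
  have Cx : L x /\ forall i, Phi x i = None.
    by split=> // i; apply: inSigma_none (HG _ (HPhi x Lx)) E (leq0n _).
  have [_ [i [Ii [Hsz Hpx]]]] := proj1 (Hc x) Cx.
  have Hinf : forall j, j < (ell i).+1 -> x j <> None by move=> j _; apply: F5 x 0 j Lx E.
  have Hcx : cyl (pre x (ell i).+1) [::] x.
    by apply: cyl_pre; [exact: HL x Lx|exact: Hinf|case: (x (ell i).+1)].
  apply: NbS_mono (NbS_cyl Hcx) => y Hy Ly.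
  have Hag := cyl_pre_agree Hinf Hy.
  have [_ ->] // : L y /\ forall i, Phi y i = None.
  apply/Hc; split=> //; exists i; split=> //; split=> // k Hk.
  by rewrite Hag ?ltnS // Hpx.
Qed.


Lemma forward (A B : countType) (L : sq A -> Prop) (G : sq B -> Prop)
  (d : B) (Phi : sq A -> sq B) :
  shift_space L -> shift_space G ->
  (forall x, L x -> G (Phi x)) ->
  (L (Oseq A) -> forall i, Phi (Oseq A) i = Some d) ->
  (G (Oseq B) -> finitely_defined L (fun x => L x /\ forall i, Phi x i = None)) ->
  continuous_on L Phi ->
  (forall x, L x -> forall i, Phi (shift x) i = shift (Phi x) i) ->
   exists C : option B -> sq A -> Prop,
     (forall a x, C a x -> L x) /\
     (forall x, L x -> exists a, C a x) /\
     (forall a a' x, C a x -> C a' x -> a = a') /\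
     (forall b x, C (Some b) x -> Lset G b) /\
     (forall a, finitely_defined L (C a)) /\
     (forall x, C None x -> C None (shift x)) /\
     (forall x, L x -> forall n, C (Phi x n) (iter n (@shift A) x)) /\
     (forall b, Lset G b -> exists l : seq (seq A * seq A),
         forall x, C (Some b) x <-> L x /\ exists2 p, p \in l & cyl p.1 p.2 x) /\
     (exists l : seq B, forall b, Lset G b -> (exists x, C (Some b) x) -> b \in l) /\
     (forall M, 1 <= M -> exists FM : seq A,
         (forall a, a \in FM -> Lset L a) /\
         forall n x, 1 <= n <= M -> cyl [::] FM x -> L x ->
           C (Some d) (iter n.-1 (@shift A) x)).
Proof.
move=> HLs HGs HPhi HO HfdN Hcont Hsh.
have OPEN0 := open0 HLs HGs HPhi HO HfdN Hcont Hsh.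
have [HL [Hcl [HLsh [HLO _]]]] := HLs; have [HG _] := HGs.
have HLit : forall x n, L x -> L (iter n (@shift A) x).
  by move=> x n Lx; elim: n => //= n IH; apply: HLsh.
have HPit : forall x n i, L x -> Phi (iter n (@shift A) x) i = Phi x (n + i).
  move=> x n i Lx; elim: n i => [|n IH] i //=.
  rewrite Hsh; last exact: HLit.
  by change (Phi (iter n (@shift A) x) i.+1 = Phi x (n.+1 + i)); rewrite IH addnS.
exists (fun a x => L x /\ Phi x 0 = a).
split; first by move=> a x [].
split; first by move=> x Lx; exists (Phi x 0).
split; first by move=> a a' x [_ <-] [_ <-].
split.
  move=> b x [Lx Hx]; exists (Phi x); split; first exact: HPhi.
  by exists 0 => j; rewrite ltnS leqn0 => /eqP ->; rewrite Hx.
split.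
  move=> a; apply: fd_of_local; [by move=> x []|exact: HL|].
  move=> x Lx; have [w [F [Hc K]]] := NbS_red (OPEN0 x Lx).
  exists (size w) => y Ly Hag.
  have Hcy := cyl_agree Hc (HL y Ly) Hag.
  by have E := K y Hcy Ly; rewrite E; split=> -[_ H]; split.
split.
  move=> x [Lx Hx]; split; first exact: HLsh.
  rewrite Hsh //; exact: inSigma_none (HG _ (HPhi x Lx)) Hx (leq0n _).
split; first by move=> x Lx n; split; [exact: HLit|rewrite HPit // addn0].
split.
  move=> b _.
  pose Pb := fun (w F : seq A) => forall y, L y -> cyl w F y -> Phi y 0 = Some b.
  have [l [Gl Kl]] := compact (Good := fun w F => Pb w F \/
        forall y, L y -> cyl w F y -> Phi y 0 <> Some b) HL Hcl
      (fun x Lx => let: ex_intro w (ex_intro F (conj Hc K)) := NbS_red (OPEN0 x Lx) in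
        ex_intro _ w (ex_intro _ F (conj
          (match eqVneq (Phi x 0) (Some b) with
           | EqNotNeq E => or_introl (fun y Ly Hy => eq_trans (K y Hy Ly) E)
           | NeqNotEq E => or_intror (fun y Ly Hy H => negP E (introT eqP (eq_trans (esym (K y Hy Ly)) H)))
           end) Hc))).
  have [l' [H1 H2]] := sub_list l (fun p => Pb p.1 p.2).
  exists l' => x; split.
    move=> [Lx Hx]; split=> //; have [p Hp Hcp] := Kl x Lx.
    exists p => //; apply: (H2 _ Hp); case: (Gl p Hp) => // Hn.
    by exfalso; apply: (Hn x Lx Hcp Hx).
  by move=> [Lx [p Hp Hcp]]; split=> //; have [_ Pp] := H1 p Hp; apply: (Pp x Lx Hcp).
split.
  have HGd : forall x, L x -> exists w F, (exists a,
        forall y, L y -> cyl w F y -> Phi y 0 = a) /\ cyl w F x.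
    move=> x Lx; have [w [F [Hc K]]] := NbS_red (OPEN0 x Lx).
    by exists w, F; split=> //; exists (Phi x 0) => y Ly Hy; apply: K.
  have [l [Gl Kl]] := compact HL Hcl HGd.
  have [lb Hlb] : exists lb : seq B, forall p, p \in l -> forall y b, L y ->
      cyl p.1 p.2 y -> Phi y 0 = Some b -> b \in lb.
    clear Kl; elim: l Gl => [|p l IH] Gl; first by exists [::].
    have [lb Hlb] := IH (fun q Hq => Gl q (@mem_behead _ (p :: l) q Hq)).
    have [a Ha] := Gl p (mem_head _ _).
    case: a Ha => [b0|] Ha.
      exists (b0 :: lb) => q; rewrite in_cons => /orP [/eqP ->|Hq] y b Ly Hy E.
        by rewrite Ha // in E; case: E => ->; rewrite mem_head.
      by rewrite in_cons (Hlb q Hq y b Ly Hy E) orbT.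
    exists lb => q; rewrite in_cons => /orP [/eqP ->|Hq] y b Ly Hy E.
      by rewrite Ha in E.
    exact: Hlb q Hq y b Ly Hy E.
  exists lb => b _ [x [Lx Hx]]; have [p Hp Hcp] := Kl x Lx.
  exact: Hlb p Hp x b Lx Hcp Hx.
move=> M HM.
case: (classic (L (Oseq A))) => LO.
- have [U [HU HUV]] := Hcont (cyl (nseq M d) [::]) (@cyl_open B (nseq M d) [::]).
  have Vp : cyl (nseq M d) [::] (Phi (Oseq A)).
    split; first exact: HG _ (HPhi _ LO).
    split; last by case: (Phi _ _).
    move=> i; rewrite size_nseq => Hi.
    by rewrite map_nseq nth_nseq Hi HO.
  have UO := proj1 (HUV _ LO) Vp.
  have [l [Hl K]] := HU _ (HL _ LO) UO.
  have [FM [HF1 HF2]] := sub_list (flatten [seq q.2 | q <- l]) (Lset L).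
  exists FM; split; first by move=> a /HF1 [].
  move=> n x Hn Hcx Lx.
  have Hin : in_all_cyl l x.
    split; first exact: HL.
    move=> p Hp; have [_ [Hp1 Hp2]] := proj2 Hl p Hp.
    have Hs0 : size p.1 <= 0 by apply: (prefix_len (k := 0) Hp1).
    split; first exact: HL.
    split; first by move=> i Hi; have := leq_trans Hi Hs0.
    move: Hs0; rewrite leqn0 => /eqP ->.
    case E: (x 0) => [a|] //; apply/negP => Ha.
    have HaFM : a \in FM.
      apply: HF2; first exact: mem_flat Hp Ha.
      by exists x; split=> //; exists 0 => j; rewrite ltnS leqn0 => /eqP ->.
    by have [_ [_]] := Hcx; rewrite /= E HaFM.
  have [_ [Hpv _]] := proj2 (HUV x Lx) (K x Hin).
  split; first exact: HLit.
  have Hn1 : n.-1 < M by case/andP: Hn; case: n => //.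
  rewrite HPit // addn0 Hpv ?size_nseq //.
  by rewrite map_nseq nth_nseq Hn1.
- have [s Hs] : exists s : seq A, forall a, Lset L a -> a \in s.
    by apply: NNPP => Hn; apply: LO; apply/HLO.
  have [FM [HF1 HF2]] := sub_list s (Lset L).
  exists FM; split; first by move=> a /HF1 [].
  move=> n x Hn Hcx Lx; exfalso.
  case E: (x 0) => [a|].
    have Ha : Lset L a.
      by exists x; split=> //; exists 0 => j; rewrite ltnS leqn0 => /eqP ->.
    have HaFM : a \in FM by apply: HF2 => //; apply: Hs.
    by have [_ [_]] := Hcx; rewrite /= E HaFM.
  apply: LO; have -> : Oseq A = x; last exact: Lx.
  apply: functional_extensionality => j; symmetry.
  exact: inSigma_none (HL x Lx) E (leq0n _).
Qed.


Lemma backward (A B : countType) (L : sq A -> Prop) (G : sq B -> Prop)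
  (d : B) (Phi : sq A -> sq B) :
  shift_space L -> shift_space G ->
  (forall x, L x -> G (Phi x)) ->
   (exists C : option B -> sq A -> Prop,
     (forall a x, C a x -> L x) /\
     (forall x, L x -> exists a, C a x) /\
     (forall a a' x, C a x -> C a' x -> a = a') /\
     (forall b x, C (Some b) x -> Lset G b) /\
     (forall a, finitely_defined L (C a)) /\
     (forall x, C None x -> C None (shift x)) /\
     (forall x, L x -> forall n, C (Phi x n) (iter n (@shift A) x)) /\
     (forall b, Lset G b -> exists l : seq (seq A * seq A),
         forall x, C (Some b) x <-> L x /\ exists2 p, p \in l & cyl p.1 p.2 x) /\
     (exists l : seq B, forall b, Lset G b -> (exists x, C (Some b) x) -> b \in l) /\
     (forall M, 1 <= M -> exists FM : seq A,
         (forall a, a \in FM -> Lset L a) /\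
         forall n x, 1 <= n <= M -> cyl [::] FM x -> L x ->
           C (Some d) (iter n.-1 (@shift A) x))) ->
  (continuous_on L Phi /\
    forall x, L x -> forall i, Phi (shift x) i = shift (Phi x) i).
Proof.
move=> HLs HGs HPhi [C [HCL [Hex [Huniq [HCG [Hfd [HCN [Hcode [Hunion [Hfin H2]]]]]]]]]].
have [HL [Hcl [HLsh _]]] := HLs; have [HG _] := HGs.
have HLit : forall x n, L x -> L (iter n (@shift A) x).
  by move=> x n Lx; elim: n => //= n IH; apply: HLsh.
have Hval : forall x n a, L x -> C a (iter n (@shift A) x) -> Phi x n = a.
  by move=> x n a Lx H; apply: Huniq (Hcode x Lx n) H.
have Rfin : forall x k i, L x -> x k = None -> (forall j, j < k -> x j <> None) -> k <= i ->
    Phi x i = Some d /\ NbS x (fun y => L y -> Phi y i = Some d).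
  move=> x k i Lx Hk Hj Hki.
  have [FM [HF1 HF2]] := H2 (i - k).+1 (ltn0Sn _).
  have Hcx : cyl (pre x k) FM x by apply: cyl_pre; [exact: HL|exact: Hj|rewrite Hk].
  have key : forall y, L y -> cyl (pre x k) FM y -> Phi y i = Some d.
    move=> y Ly Hy; apply: Hval => //.
    rewrite -(subnK Hki) iterD.
    have := HF2 (i - k).+1 (iter k (@shift A) y) _ _ (HLit y k Ly); apply.
      by rewrite ltn0Sn leqnn.
    split; first by apply: inSigma_shift; apply: HL.
    split=> //; rewrite iter_shiftE addn0 /=.
    by have [_ [_]] := Hy; have [-> _] := pre_spec Hj.
  split; first exact: key.
  by apply: NbS_mono (NbS_cyl Hcx) => y Hy Ly; apply: key.
have Rsome : forall x i b, L x -> Phi x i = Some b -> NbS x (fun y => L y -> Phi y i = Some b).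
  move=> x i b Lx E.
  have [HS|[k [Hki [Hk Hj]]]] := first_fail (fun j => x j <> None) i.
    have Cb := Hcode x Lx i; rewrite E in Cb.
    have [lb Hlb] := Hunion b (HCG _ _ Cb).
    have [_ [p Hp Hcp]] := proj1 (Hlb _) Cb.
    apply: NbS_mono (NbS_shift (HL x Lx) HS (NbS_cyl Hcp)) => y Hy Ly.
    apply: Hval => //; apply/Hlb; split; [exact: HLit|by exists p].
  have [Hd HN] := Rfin x k i Lx (NNPP _ Hk) Hj (ltnW Hki).
  by move: E; rewrite Hd => -[<-].
have Rnone : forall x i (F : seq B), L x -> Phi x i = None ->
    NbS x (fun y => L y -> match Phi y i with Some a => is_true (a \notin F) | None => True end).
  move=> x i F Lx E.
  have [HS|[k [Hki [Hk Hj]]]] := first_fail (fun j => x j <> None) i; last first.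
    have [Hd _] := Rfin x k i Lx (NNPP _ Hk) Hj (ltnW Hki).
    by rewrite Hd in E.
  have Cx := Hcode x Lx i; rewrite E in Cx.
  set z := iter i (@shift A) x; have Lz : L z by apply: HLit.
  have Hf : forall f, f \in F -> NbS z (fun u => L u -> ~ C (Some f) u).
    move=> f _; case: (classic (Lset G f)) => Hf.
      have [lb Hlb] := Hunion f Hf.
      have Hnot : forall p, p \in lb -> ~ cyl p.1 p.2 z.
        move=> p Hp Hc.
        by have := Huniq _ _ _ Cx (proj2 (Hlb z) (conj Lz (ex_intro2 _ _ p Hp Hc))).
      apply: NbS_mono (NbS_all (P := fun p u => ~ cyl p.1 p.2 u) (HL z Lz)
          (fun p Hp => NbS_notcyl (HL z Lz) (Hnot p Hp))) => u Hu Lu Cu.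
      have [_ [p Hp Hcp]] := proj1 (Hlb u) Cu.
      exact: Hu p Hp Hcp.
    by apply: NbS_mono (NbS_true (HL z Lz)) => u _ Lu Cu; apply: Hf; apply: HCG Cu.
  have := NbS_shift (HL x Lx) HS (NbS_all (P := fun f u => L u -> ~ C (Some f) u) (HL z Lz) Hf).
  apply: NbS_mono => y Hy Ly.
  case E': (Phi y i) => [a|] //; apply/negP => HaF.
  by apply: (Hy a HaF (HLit y i Ly)); rewrite -E'; apply: Hcode.
have Rcyl : forall x (w F : seq B), L x -> cyl w F (Phi x) ->
    NbS x (fun y => L y -> cyl w F (Phi y)).
  move=> x w F Lx [_ [Hp Hl]].
  have K1 : NbS x (fun y => forall i, i \in iota 0 (size w) -> L y -> Phi y i = Phi x i).
    apply: (NbS_all (P := fun i y => L y -> Phi y i = Phi x i) (HL x Lx)) => i; rewrite mem_iota add0n => /andP [_ Hi].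
    have [b Hb] := nth_map_some Hi.
    have Ex : Phi x i = Some b by rewrite Hp.
    by apply: NbS_mono (Rsome x i b Lx Ex) => y K Ly; rewrite Ex K.
  have K2 : NbS x (fun y => L y -> match Phi y (size w) with
                          Some a => is_true (a \notin F) | None => True end).
    case E: (Phi x (size w)) => [e|]; last exact: Rnone.
    apply: NbS_mono (Rsome x _ e Lx E) => y K Ly.
    by rewrite (K Ly); rewrite E in Hl.
  apply: NbS_mono (NbS_and K1 K2) => y [Ky1 Ky2] Ly.
  split; first exact: HG _ (HPhi y Ly).
  split; last exact: Ky2.
  by move=> i Hi; rewrite Ky1 ?mem_iota //; apply: Hp.
split; last first.
  move=> x Lx i; apply: Hval; first exact: HLsh.
  by rewrite -iterSr; apply: Hcode.
move=> V HV; exists (fun x => ~ L x \/ V (Phi x)); split; last first.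
  by move=> x Lx; split=> [H|[H|H]]; [right|exfalso|].
move=> x Hx HU; case: (classic (L x)) => Lx.
  have HVx : V (Phi x) by case: HU.
  have [l [Hl K]] := HV _ (HG _ (HPhi x Lx)) HVx.
  have := NbS_all (P := fun p y => L y -> cyl p.1 p.2 (Phi y)) (HL x Lx)
    (fun p Hp => Rcyl x p.1 p.2 Lx (proj2 Hl p Hp)).
  apply: NbS_mono => y Hy; case: (classic (L y)) => Ly; last by left.
  right; apply: K; split; first exact: HG _ (HPhi y Ly).
  by move=> p Hp; apply: Hy.
by apply: NbS_mono (Hcl x Hx Lx) => y Hy; left.
Qed.

Theorem mainTheorem2 (A B : countType) (L : sq A -> Prop) (G : sq B -> Prop)
  (d : B) (Phi : sq A -> sq B) :
  shift_space L -> shift_space G ->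
  (forall x, L x -> G (Phi x)) ->
  (L (Oseq A) -> forall i, Phi (Oseq A) i = Some d) ->
  (G (Oseq B) -> finitely_defined L (fun x => L x /\ forall i, Phi x i = None)) ->
  ((continuous_on L Phi /\
    forall x, L x -> forall i, Phi (shift x) i = shift (Phi x) i)
   <->
   exists C : option B -> sq A -> Prop,
     (* {C_a} is a partition of Λ *)
     (forall a x, C a x -> L x) /\
     (forall x, L x -> exists a, C a x) /\
     (forall a a' x, C a x -> C a' x -> a = a') /\
     (* only symbols of L_Γ ∪ {ε} are used *)
     (forall b x, C (Some b) x -> Lset G b) /\
     (* sliding block code *)
     (forall a, finitely_defined L (C a)) /\
     (forall x, C None x -> C None (shift x)) /\
     (forall x, L x -> forall n, C (Phi x n) (iter n (@shift A) x)) /\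
     (* each C_a, a ∈ L_Γ, is a finite union of generalized cylinders of Λ *)
     (forall b, Lset G b -> exists l : seq (seq A * seq A),
         forall x, C (Some b) x <-> L x /\ exists2 p, p \in l & cyl p.1 p.2 x) /\
     (* (1) *)
     (exists l : seq B, forall b, Lset G b -> (exists x, C (Some b) x) -> b \in l) /\
     (* (2) *)
     (forall M, 1 <= M -> exists FM : seq A,
         (forall a, a \in FM -> Lset L a) /\
         forall n x, 1 <= n <= M -> cyl [::] FM x -> L x ->
           C (Some d) (iter n.-1 (@shift A) x))).
Proof.
move=> HLs HGs HPhi HO HfdN; split.
  by move=> [Hc Hs]; apply: forward.
exact: backward.
Qed.
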